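(* For every integer $k\ge 1$ there is a polynomial $D_k$ of degree exactly $2k-2$ such that $d_k(n)=D_k(n)$ for all integers $n\ge 1$; and for every integer $k\ge 2$ there is a polynomial $S_k$ of degree exactly $2k-3$ such that $s_k(n)=S_k(n)$ for all integers $n\ge 1$.
   Context: For $n\ge 1$, the $2\times n$ board consists of $2n$ unit squares arranged in 2 rows and $n$ columns; two squares are adjacent iff they share an edge. A piece is a nonempty set of squares that is connected under adjacency. A division of the board into $k$ pieces is a partition of the set of all $2n$ squares into exactly $k$ pieces. $d_k(n)$ denotes the number of divisions of the $2\times n$ board into $k$ pieces. $s_k(n)$ denotes the number of such divisions in which the two squares of the rightmost column lie in different pieces. *)

(* Defs.v *)
From mathcomp Require Import all_boot all_order all_algebra.
Set Implicit Arguments. Unset Strict Implicit. Unset Printing Implicit Defensive.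

(* A square of the 2 x n board: (row, column), row in {0,1}, column in {0..n-1}. *)
Definition square (n : nat) : finType := ('I_2 * 'I_n)%type.

Definition adjacent (n : nat) : rel (square n) :=
  fun x y =>
    ((x.1 == y.1) && ((x.2.+1 == y.2 :> nat) || (y.2.+1 == x.2 :> nat)))
    || ((x.2 == y.2) && (x.1 != y.1)).

Definition connected_set (n : nat) (A : {set square n}) : bool :=
  [forall x in A, forall y in A,
     connect [rel u v | adjacent u v && (u \in A) && (v \in A)] x y].

Definition piece (n : nat) (A : {set square n}) : bool :=
  (A != set0) && connected_set A.

Definition division (n k : nat) (P : {set {set square n}}) : bool :=
  [&& partition P [set: square n], #|P| == k & [forall A in P, piece A]].

Arguments division : clear implicits.
Definition d (k n : nat) : nat := #|[set P | division n k P]|.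

(* The two squares of the rightmost column lie in different pieces
   (only meaningful for n >= 1). *)
Definition rightmost_split (n : nat) (P : {set {set square n}}) : bool :=
  [exists j : 'I_n, (j.+1 == n) &&
     (pblock P (@ord0 1, j) != pblock P (@ord_max 1, j))].

Definition s (k n : nat) : nat := #|[set P | division n k P && rightmost_split P]|.

(* Main.v *)
Require Import Defs.
From mathcomp Require Import all_boot all_order all_algebra zify ring.
Set Implicit Arguments. Unset Strict Implicit. Unset Printing Implicit Defensive.

Section Generic.
Variable T : finType.
Implicit Types P : {set {set T}}.

Definition sm P x y := pblock P x == pblock P y.

Lemma partT_pblock P x y : partition P [set: T] -> (y \in pblock P x) = sm P x y.
Proof. by case/and3P=> /eqP cov tI _; rewrite /sm eq_pblock // cov inE. Qed.

Lemma sm_refl P x : sm P x x.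
Proof. exact: eqxx. Qed.
Lemma sm_sym P x y : sm P x y = sm P y x.
Proof. by rewrite /sm eq_sym. Qed.
Lemma sm_trans P x y z : sm P x y -> sm P y z -> sm P x z.
Proof. by rewrite /sm => /eqP -> . Qed.

Lemma part_eq_sm P1 P2 : partition P1 [set: T] -> partition P2 [set: T] ->
  (forall x y, sm P1 x y = sm P2 x y) -> P1 = P2.
Proof.
move=> h1 h2 e.
rewrite -(preim_partition_pblock h1) -(preim_partition_pblock h2).
rewrite /preim_partition /equivalence_partition; apply: eq_imset => x.
by apply/setP=> y; rewrite !inE; have := e x y; rewrite /sm => ->.
Qed.

Lemma sm_preim (L : eqType) (g : T -> L) x y :
  sm (preim_partition g [set: T]) x y = (g x == g y).
Proof.
have eqi : {in [set: T] & &, equivalence_rel (fun x y => g x == g y)}.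
  by move=> ? ? ? _ _ _; split=> // /eqP->.
rewrite -partT_pblock ?preim_partitionP //.
by rewrite (pblock_equivalence_partition eqi) ?inE.
Qed.

Lemma part_imset P : partition P [set: T] -> P = pblock P @: [set: T].
Proof.
case/and3P=> /eqP cov tI n0; apply/setP=> B; apply/idP/imsetP.
  move=> PB; have /set0Pn[x Bx] : B != set0 by apply: contraNneq n0 => <-.
  by exists x; rewrite ?inE // (def_pblock tI PB Bx).
by case=> x _ ->; apply: pblock_mem; rewrite cov inE.
Qed.

Lemma card_kernel (L1 L2 : finType) (f : T -> L1) (g : T -> L2) (x0 : T) :
  (forall x y, (f x == f y) = (g x == g y)) ->
  #|f @: [set: T]| = #|g @: [set: T]|.
Proof.
move=> H.
have fg x y : f x = f y -> g x = g y by move/eqP; rewrite H => /eqP.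
pose h l := g (odflt x0 [pick x | f x == l]).
have hf x : h (f x) = g x.
  by rewrite /h; case: pickP => [y /eqP fy /= | /(_ x)]; [apply: fg | rewrite eqxx].
have -> : g @: [set: T] = h @: (f @: [set: T]).
  by rewrite -imset_comp; apply: eq_imset => x; rewrite /= hf.
rewrite [RHS]card_in_imset // => _ _ /imsetP[x _ ->] /imsetP[y _ ->].
by rewrite !hf => /eqP; rewrite -H => /eqP.
Qed.

Lemma card_part_kernel P (L : finType) (g : T -> L) (x0 : T) :
  partition P [set: T] -> (forall x y, sm P x y = (g x == g y)) ->
  #|P| = #|g @: [set: T]|.
Proof.
move=> hP H; rewrite {1}(part_imset hP); apply: card_kernel x0 _ => x y.
by rewrite -H.
Qed.

Lemma connect_homo (T2 : finType) (e1 : rel T) (e2 : rel T2) (f : T -> T2) :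
  (forall x y, e1 x y -> connect e2 (f x) (f y)) ->
  forall x y, connect e1 x y -> connect e2 (f x) (f y).
Proof.
move=> H x _ /connectP[p pp ->]; elim: p x pp => [|z p IH] x /=; first by [].
by case/andP=> ez pz; apply: connect_trans (H _ _ ez) (IH _ pz).
Qed.

Lemma cross (e : rel T) (S : pred T) x y :
  connect e x y -> S x -> ~~ S y -> exists z1 z2, [/\ e z1 z2, S z1 & ~~ S z2].
Proof.
move=> /connectP[p pp ->]; elim: p x pp => [|z p IH] x /=; first by move=> _ ->.
case/andP=> ez pz Sx; case Sz: (S z); first exact: IH.
by move=> _; exists x, z; rewrite Sz.
Qed.

End Generic.


Section Board.
Variable n : nat.
Definition emb (x : square n.+1) : square n.+2 :=
  (x.1, widen_ord (leqnSn n.+1) x.2).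
Definition nt : square n.+2 := (ord0, ord_max).
Definition nb : square n.+2 := (ord_max, ord_max).
Definition ot : square n.+1 := (ord0, ord_max).
Definition ob : square n.+1 := (ord_max, ord_max).

Lemma emb_inj : injective emb.
Proof.
move=> [r c] [r' c'] [-> e]; congr pair; apply: val_inj.
exact: e.
Qed.

Lemma squareP (y : square n.+2) : [\/ y = nt, y = nb | exists x, y = emb x].
Proof.
case: y => r c; have [e | ne] := eqVneq (val c) n.+1.
  have -> : c = ord_max by apply: val_inj.
  case: r => [[|[|r]] lr] //.
    by apply: Or31; congr pair; apply: val_inj.
  by apply: Or32; congr pair; apply: val_inj.
have lc : c < n.+1 by have := ltn_ord c; rewrite ltnS leq_eqVlt (negbTE ne).
by apply: Or33; exists (r, Ordinal lc); congr pair; apply: val_inj.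
Qed.

Lemma nt_emb x : nt != emb x.
Proof.
apply/eqP=> /(congr1 (fun z : square n.+2 => val z.2)) /=.
by have := ltn_ord x.2 => /[swap] <-; rewrite ltnn.
Qed.
Lemma nb_emb x : nb != emb x.
Proof.
apply/eqP=> /(congr1 (fun z : square n.+2 => val z.2)) /=.
by have := ltn_ord x.2 => /[swap] <-; rewrite ltnn.
Qed.
Lemma nt_nb : nt != nb. Proof. by []. Qed.

Lemma adj_sym m (x y : square m) : adjacent x y = adjacent y x.
Proof.
rewrite /adjacent; congr orb; first by rewrite eq_sym orbC.
by rewrite eq_sym [x.1 == _]eq_sym.
Qed.

Lemma adj_emb x y : adjacent (emb x) (emb y) = adjacent x y.
Proof.
by rewrite /adjacent /= -!val_eqE /= !val_eqE.
Qed.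

Lemma rows (r : 'I_2) : r = ord0 \/ r = ord_max.
Proof.
by case: r => [[|[|r]] lr]; [left|right|]; rewrite //; apply: val_inj.
Qed.

Lemma adj_emb_nt x : adjacent (emb x) nt = (x == ot).
Proof.
case: x => r c; rewrite /adjacent /ot /= -!val_eqE /=.
have := ltn_ord c; rewrite xpair_eqE -val_eqE /=.
case: (rows r) => ->; rewrite /= ?andbT ?andbF ?orbF //.
- by rewrite -val_eqE /=; lia.
- by lia.
Qed.

Lemma adj_nt_emb x : adjacent nt (emb x) = (x == ot).
Proof. by rewrite adj_sym adj_emb_nt. Qed.

Lemma adj_emb_nb x : adjacent (emb x) nb = (x == ob).
Proof.
case: x => r c; rewrite /adjacent /ob /= -!val_eqE /=.
have := ltn_ord c; rewrite xpair_eqE -val_eqE /=.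
case: (rows r) => ->; rewrite /= ?andbT ?andbF ?orbF //.
- by lia.
- by rewrite -val_eqE /=; lia.
Qed.

Lemma adj_nb_emb x : adjacent nb (emb x) = (x == ob).
Proof. by rewrite adj_sym adj_emb_nb. Qed.

Lemma adj_irr m (x : square m) : adjacent x x = false.
Proof. by rewrite /adjacent !eqxx /= orbF orbb gtn_eqF. Qed.

Lemma adj_nt_nb : adjacent nt nb.
Proof. by rewrite /adjacent /= -!val_eqE /= ?eqxx. Qed.
Lemma adj_nb_nt : adjacent nb nt.
Proof. by rewrite /adjacent /= -!val_eqE /= ?eqxx. Qed.
Lemma adj_ot_ob : adjacent ot ob.
Proof. by rewrite /adjacent /= -!val_eqE /= ?eqxx. Qed.
Lemma adj_ob_ot : adjacent ob ot.
Proof. by rewrite /adjacent /= -!val_eqE /= ?eqxx. Qed.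

Definition unemb (z : square n.+2) : square n.+1 := (z.1, inord z.2).
Lemma unembK x : unemb (emb x) = x.
Proof. by case: x => r c; rewrite /unemb /=; congr pair; apply: val_inj; rewrite /= inordK. Qed.

End Board.


Definition blk m (A : {set square m}) : rel (square m) :=
  [rel u v | adjacent u v && (u \in A) && (v \in A)].

Lemma blk_sym m (A : {set square m}) : connect_sym (blk A).
Proof.
apply: sym_connect_sym => u v; rewrite /blk /= adj_sym.
by case: (u \in A); case: (v \in A); rewrite ?andbT ?andbF.
Qed.

Lemma blk_step m (A : {set square m}) a b :
  a \in A -> b \in A -> (a == b) || adjacent a b -> connect (blk A) a b.
Proof.
move=> aA bA /orP[/eqP -> // | ab]; apply: connect1; by rewrite /blk /= ab aA bA.
Qed.

Lemma hub m (A : {set square m}) h :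
  (forall v, v \in A -> connect (blk A) v h) ->
  forall z w, z \in A -> w \in A -> connect (blk A) z w.
Proof.
move=> H z w zA wA; apply: connect_trans (H z zA) _.
by rewrite blk_sym; apply: H.
Qed.

Lemma div_intro m (P : {set {set square m}}) :
  partition P [set: square m] ->
  (forall x y, sm P x y -> connect (blk (pblock P x)) x y) ->
  division m #|P| P.
Proof.
move=> hP H; rewrite /division hP eqxx /=; apply/forall_inP => A PA.
have [/eqP cov tI n0] := and3P hP.
rewrite /piece; have -> : A != set0 by apply: contraNneq n0 => <-.
apply/forall_inP => x xA; apply/forall_inP => y yA.
have eA : A = pblock P x by rewrite (def_pblock tI PA xA).
move: yA; rewrite eA partT_pblock // => /H.
by rewrite /blk.
Qed.

Lemma div_part m k (P : {set {set square m}}) :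
  division m k P -> partition P [set: square m].
Proof. by case/and3P. Qed.

Lemma div_card m k (P : {set {set square m}}) : division m k P -> #|P| = k.
Proof. by case/and3P=> _ /eqP. Qed.

Lemma div_conn m k (P : {set {set square m}}) : division m k P ->
  forall x y, sm P x y -> connect (blk (pblock P x)) x y.
Proof.
case/and3P=> hP _ /forall_inP H x y sxy.
have [/eqP cov tI n0] := and3P hP.
have xc : x \in cover P by rewrite cov inE.
have /andP[_ /forall_inP Hc] := H _ (pblock_mem xc).
have := Hc x; rewrite mem_pblock xc => /(_ isT) /forall_inP /(_ y).
by rewrite partT_pblock // sxy => /(_ isT).
Qed.

Lemma split_sm m (P : {set {set square m.+1}}) :
  rightmost_split P = ~~ sm P (ord0, ord_max) (ord_max, ord_max).
Proof.
rewrite /rightmost_split /sm; apply/existsP/idP => [[j /andP[/eqP e ne]]|ne].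
  by move: ne; have -> : j = ord_max by apply: val_inj; apply/eqP; rewrite /= -eqSS e.
by exists ord_max; rewrite eqxx.
Qed.


Section Restr.
Variable n : nat.
Local Notation T := (square n.+1).
Local Notation T' := (square n.+2).
Local Notation emb := (@emb n).
Local Notation nt := (@nt n).
Local Notation nb := (@nb n).
Local Notation ot := (@ot n).
Local Notation ob := (@ob n).

Definition restr (P : {set {set T'}}) : {set {set T}} :=
  preim_partition (fun x => pblock P (emb x)) [set: T].

Lemma restr_part P : partition (restr P) [set: T].
Proof. exact: preim_partitionP. Qed.

Lemma sm_restr P x y : sm (restr P) x y = sm P (emb x) (emb y).
Proof. by rewrite sm_preim. Qed.

Definition isnew (z : T') := (z == nt) || (z == nb).

Lemma isnew_emb x : isnew (emb x) = false.
Proof. by rewrite /isnew eq_sym (negbTE (nt_emb _)) eq_sym (negbTE (nb_emb _)). Qed.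

Lemma cross_new k P z x : division n.+2 k P -> isnew z -> sm P z (emb x) ->
  exists2 w, isnew w && sm P z w & ((w == nt) && sm P z (emb ot)) || ((w == nb) && sm P z (emb ob)).
Proof.
move=> hD zn szx; have hP := div_part hD.
have := cross (div_conn hD szx) (S := isnew) zn; rewrite isnew_emb => /(_ isT).
case=> z1 [z2] [/= /andP[/andP[a12 i1] i2] n1 n2].
move: i1 i2; rewrite !partT_pblock // => s1 s2.
have [e|e|[w e]] := squareP z2; first by move: n2; rewrite e /isnew eqxx.
  by move: n2; rewrite e /isnew eqxx orbT.
exists z1; first by rewrite n1 s1.
move: s2; rewrite e => s2.
move: n1 a12; rewrite /isnew e => /orP[]/eqP ->.
  by rewrite adj_nt_emb eqxx => /eqP <-; rewrite s2.
by rewrite adj_nb_emb eqxx /= => /eqP <-.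
Qed.

Lemma L_nt k P x : division n.+2 k P -> sm P nt (emb x) ->
  sm P nt (emb ot) || (sm P nt nb && sm P nt (emb ob)).
Proof.
move=> hD h; have := cross_new hD _ h; rewrite /isnew eqxx => /(_ isT).
case=> w /andP[_ sw] /orP[/andP[_ ->] // | /andP[/eqP ew ->]].
by rewrite -ew sw orbT.
Qed.

Lemma L_nb k P x : division n.+2 k P -> sm P nb (emb x) ->
  sm P nb (emb ob) || (sm P nb nt && sm P nb (emb ot)).
Proof.
move=> hD h; have := cross_new hD _ h; rewrite /isnew eqxx orbT => /(_ isT).
case=> w /andP[_ sw] /orP[/andP[/eqP ew ->] | /andP[_ ->] //].
by rewrite -ew sw orbT.
Qed.

Lemma restr_div k P : division n.+2 k P -> division n.+1 #|restr P| (restr P).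
Proof.
move=> hD; have hP := div_part hD.
apply: div_intro; first exact: restr_part.
move=> x y sxy.
set A := pblock (restr P) x; set B := pblock P (emb x).
have mA u : (u \in A) = sm P (emb x) (emb u).
  by rewrite /A partT_pblock ?restr_part // sm_restr.
have mB v : (v \in B) = sm P (emb x) v by rewrite /B partT_pblock.
pose pr (z : T') := if z == nt then (if emb ot \in B then ot else ob)
  else if z == nb then (if emb ob \in B then ob else ot) else unemb z.
have pr_emb u : pr (emb u) = unemb (emb u).
  have h1 : (emb u == nt) = false by rewrite eq_sym (negbTE (nt_emb _)).
  have h2 : (emb u == nb) = false by rewrite eq_sym (negbTE (nb_emb _)).
  by rewrite /pr h1 h2.
have F1 : nt \in B -> (emb ot \in B) || (emb ob \in B).
  rewrite !mB => h; have := @L_nt k P x hD; rewrite sm_sym h => /(_ isT).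
  case/orP=> [h1|/andP[_ h1]]; by rewrite (sm_trans h h1) ?orbT.
have F2 : nb \in B -> (emb ot \in B) || (emb ob \in B).
  rewrite !mB => h; have := @L_nb k P x hD; rewrite sm_sym h => /(_ isT).
  case/orP=> [h1|/andP[_ h1]]; by rewrite (sm_trans h h1) ?orbT.
have prB z : z \in B -> pr z \in A.
  have [->|->|[w ->]] := squareP z.
  - move=> h; rewrite /pr eqxx; case: ifP; first by rewrite mA -mB.
    by move=> hn; move: (F1 h); rewrite hn /= mA -mB.
  - move=> h; rewrite /pr eqxx /=; case: ifP; first by rewrite mA -mB.
    by move=> hn; move: (F2 h); rewrite hn orbF mA -mB.
  - by rewrite pr_emb unembK mA -mB.
have step z1 z2 : blk B z1 z2 -> connect (blk A) (pr z1) (pr z2).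
  rewrite /blk /= => /andP[/andP[a12 i1] i2].
  apply: (@blk_step _ A); [exact: prB | exact: prB |].
  have [e1|e1|[w1 e1]] := squareP z1; subst z1.
  - have [e2|e2|[w2 e2]] := squareP z2; subst z2.
    + by rewrite adj_irr in a12.
    + rewrite /pr !eqxx /=.
      by case: ifP; case: ifP; rewrite ?eqxx ?adj_ot_ob ?adj_ob_ot ?orbT.
    + move: a12; rewrite adj_nt_emb => /eqP ew; subst w2.
      by rewrite pr_emb unembK /pr eqxx i2 eqxx.
  - have [e2|e2|[w2 e2]] := squareP z2; subst z2.
    + rewrite /pr !eqxx /=.
      by case: ifP; case: ifP; rewrite ?eqxx ?adj_ot_ob ?adj_ob_ot ?orbT.
    + by rewrite adj_irr in a12.
    + move: a12; rewrite adj_nb_emb => /eqP ew; subst w2.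
      by rewrite pr_emb unembK /pr eqxx /= i2 eqxx.
  - have [e2|e2|[w2 e2]] := squareP z2; subst z2.
    + move: a12; rewrite adj_emb_nt => /eqP ew; subst w1.
      by rewrite pr_emb unembK /pr eqxx i1 eqxx.
    + move: a12; rewrite adj_emb_nb => /eqP ew; subst w1.
      by rewrite pr_emb unembK /pr eqxx /= i1 eqxx.
    + by rewrite !pr_emb !unembK -adj_emb a12 orbT.
have sxy' : sm P (emb x) (emb y) by rewrite -sm_restr.
have := div_conn hD sxy'.
move/(connect_homo step); rewrite !pr_emb !unembK.
by rewrite /A /B.
Qed.

Definition sigT := (bool * bool * bool)%type.

Definition gl (Q : {set {set T}}) (sg : sigT) (z : T') : ({set T} + bool)%type :=
  let: (jt, jb, c) := sg in
  if z == nt then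
    (if jt then inl (pblock Q ot) else if c && jb then inl (pblock Q ob) else inr false)
  else if z == nb then
    (if jb then inl (pblock Q ob) else if c && jt then inl (pblock Q ot) else inr (~~ c))
  else inl (pblock Q (unemb z)).

Definition ext Q sg := preim_partition (gl Q sg) [set: T'].
Definition sig (P : {set {set T'}}) : sigT := (sm P nt (emb ot), sm P nb (emb ob), sm P nt nb).
Definition valid (u : bool) (sg : sigT) := let: (jt,jb,c) := sg in
  if u then ~~ ((jt && jb && ~~c) || (c && (jt != jb))) else ~~ (jt && jb && c).
Definition delta (sg : sigT) : nat := let: (jt,jb,c) := sg in
  (~~ jt && ~~ (c && jb)) + (~~ jb && ~~ (c && jt) && ~~ c).

Lemma emb_nt x : (emb x == nt) = false.
Proof. by rewrite eq_sym (negbTE (nt_emb _)). Qed.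
Lemma emb_nb x : (emb x == nb) = false.
Proof. by rewrite eq_sym (negbTE (nb_emb _)). Qed.
Lemma nb_nt : (nb == nt) = false. Proof. by []. Qed.

Lemma gl_emb Q sg x : gl Q sg (emb x) = inl (pblock Q x).
Proof. by case: sg => [[jt jb] c]; rewrite /gl emb_nt emb_nb unembK. Qed.

Lemma ext_part Q sg : partition (ext Q sg) [set: T'].
Proof. exact: preim_partitionP. Qed.

Lemma sm_ext Q sg z w : sm (ext Q sg) z w = (gl Q sg z == gl Q sg w).
Proof. exact: sm_preim. Qed.

Lemma restr_ext Q sg : partition Q [set: T] -> restr (ext Q sg) = Q.
Proof.
move=> hQ; apply: part_eq_sm; rewrite ?restr_part // => x y.
by rewrite sm_restr sm_ext !gl_emb.
Qed.

Lemma sig_ext Q sg : valid (sm Q ot ob) sg -> sig (ext Q sg) = sg.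
Proof.
case: sg => [[jt jb] c]; rewrite /sig !sm_ext !gl_emb /gl !eqxx nb_nt /=.
rewrite /sm; case: (pblock Q ot =P pblock Q ob) => [->|ne];
  case: jt; case: jb; case: c => //=; rewrite ?eqxx //.
all: move=> _.
all: have e1 : (inl (pblock Q ot) == inl (pblock Q ob) :> ({set T} + bool)) = false by apply/eqP => -[].
all: have e2 : (inl (pblock Q ob) == inl (pblock Q ot) :> ({set T} + bool)) = false by apply/eqP => -[] /esym.
all: by rewrite ?e1 ?e2.
Qed.

Lemma setT_split : [set: T'] = nt |: (nb |: (emb @: [set: T])).
Proof.
apply/setP => z; rewrite !inE; apply/esym.
have [->|->|[w ->]] := squareP z; rewrite ?eqxx ?orbT //.
by rewrite imset_f ?inE ?orbT.
Qed.

Lemma card_ext Q sg : partition Q [set: T] -> #|ext Q sg| = #|Q| + delta sg.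
Proof.
move=> hQ.
rewrite (card_part_kernel (g := gl Q sg) nt (ext_part Q sg)); last by move=> *; exact: sm_ext.
rewrite {2}(part_imset hQ) setT_split !imsetU1.
have -> : gl Q sg @: (emb @: [set: T]) = inl @: (pblock Q @: [set: T]).
  by rewrite -!imset_comp; apply: eq_imset => x; rewrite /= gl_emb.
set O := inl @: _.
have cO : #|O| = #|pblock Q @: [set: T]|.
  by apply: card_imset => a b [].
have mO a : (inl (pblock Q a) \in O) = true.
  by apply: imset_f; apply: imset_f; rewrite inE.
have mOr b : (inr b \in O) = false.
  by apply/negbTE/imsetP => -[? _].
rewrite !cardsU1 cO !inE; case: sg => [[jt jb] c].
rewrite /gl !eqxx nb_nt /delta.
by case: jt; case: jb; case: c; rewrite /= ?mO ?mOr ?orbT /= ?eqxx [RHS]addnC !addnA.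
Qed.

Lemma gl_nt Q sg : gl Q sg nt = let: (jt, jb, c) := sg in
  (if jt then inl (pblock Q ot) else if c && jb then inl (pblock Q ob) else inr false).
Proof. by case: sg => [[jt jb] c]; rewrite /gl eqxx. Qed.
Lemma gl_nb Q sg : gl Q sg nb = let: (jt, jb, c) := sg in
  (if jb then inl (pblock Q ob) else if c && jt then inl (pblock Q ot) else inr (~~ c)).
Proof. by case: sg => [[jt jb] c]; rewrite /gl eqxx nb_nt. Qed.


Lemma gl_nt_inl Q sg X : gl Q sg nt = inl X ->
  (gl Q sg (emb ot) = inl X) \/ (gl Q sg nb = inl X /\ gl Q sg (emb ob) = inl X).
Proof.
rewrite !gl_emb gl_nt gl_nb; case: sg => [[jt jb] c].
case: jt => [[<-]|]; first by left.
by case: c; case: jb => //= -[<-]; right.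
Qed.

Lemma gl_nb_inl Q sg X : gl Q sg nb = inl X ->
  (gl Q sg (emb ob) = inl X) \/ (gl Q sg nt = inl X /\ gl Q sg (emb ot) = inl X).
Proof.
rewrite !gl_emb gl_nt gl_nb; case: sg => [[jt jb] c].
case: jb => [[<-]|]; first by left.
by case: c; case: jt => //= -[<-]; right.
Qed.

Lemma gl_inl Q sg z X : gl Q sg z = inl X -> exists a, X = pblock Q a.
Proof.
have [->|->|[a ->]] := squareP z.
- by case/gl_nt_inl => [|[_]]; rewrite gl_emb => -[<-]; eexists.
- by case/gl_nb_inl => [|[_]]; rewrite gl_emb => -[<-]; eexists.
- by rewrite gl_emb => -[<-]; exists a.
Qed.

Lemma gl_inr Q sg z b : gl Q sg z = inr b -> isnew z.
Proof.
have [->|->|[a ->]] := squareP z; rewrite /isnew ?eqxx ?orbT //.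
by rewrite gl_emb.
Qed.

Lemma ext_div k Q sg : division n.+1 k Q -> division n.+2 #|ext Q sg| (ext Q sg).
Proof.
move=> hD; have hQ := div_part hD.
apply: div_intro; first exact: ext_part.
move=> z w szw; set B := pblock (ext Q sg) z.
have mB v : (v \in B) = (gl Q sg z == gl Q sg v).
  by rewrite /B partT_pblock ?ext_part // sm_ext.
have wB : w \in B by rewrite mB -sm_ext.
have zB : z \in B by rewrite mB.
have old y a : emb y \in B -> emb a \in B -> connect (blk B) (emb y) (emb a).
  rewrite !mB !gl_emb => /eqP ey /eqP ea.
  have sya : sm Q y a.
    rewrite /sm; have [->] : inl (pblock Q y) = inl (pblock Q a) :> ({set T} + bool) by rewrite -ey -ea.
    exact: eqxx.
  have := div_conn hD sya; apply: connect_homo => u1 u2.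
  rewrite /blk /= => /andP[/andP[a12 i1] i2]; apply: connect1.
  move: i1 i2; rewrite !partT_pblock // => i1 i2.
  rewrite /= adj_emb a12 !mB !gl_emb ey /=.
  by move: i1 i2; rewrite /sm => /eqP -> /eqP ->; rewrite !eqxx.
have hub2 (h : T') : h \in B -> (forall v, v \in B -> connect (blk B) v h) ->
    connect (blk B) z w.
  by move=> hB H; apply: (hub H).
case e: (gl Q sg z) => [X | bb].
- have [a ea] := gl_inl e; subst X.
  have aB : emb a \in B by rewrite mB e gl_emb.
  apply: (hub2 (emb a)) => // v; rewrite mB e.
  have [->|->|[y ->]] := squareP v => /eqP /esym ev.
  + case: (gl_nt_inl ev) => [e1 | [e1 e2]].
    * have oB : emb ot \in B by rewrite mB e e1.
      apply: connect_trans (old _ _ oB aB).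
      by apply: connect1; rewrite /blk /= adj_nt_emb eqxx oB mB e ev eqxx.
    * have oB : emb ob \in B by rewrite mB e e2.
      have bB : nb \in B by rewrite mB e e1.
      apply: connect_trans (old _ _ oB aB).
      apply: (@connect_trans _ _ nb); apply: connect1.
        by rewrite /blk /= adj_nt_nb bB mB e ev eqxx.
      by rewrite /blk /= adj_nb_emb eqxx oB bB.
  + case: (gl_nb_inl ev) => [e1 | [e1 e2]].
    * have oB : emb ob \in B by rewrite mB e e1.
      apply: connect_trans (old _ _ oB aB).
      by apply: connect1; rewrite /blk /= adj_nb_emb eqxx oB mB e ev eqxx.
    * have oB : emb ot \in B by rewrite mB e e2.
      have tB : nt \in B by rewrite mB e e1.
      apply: connect_trans (old _ _ oB aB).
      apply: (@connect_trans _ _ nt); apply: connect1.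
        by rewrite /blk /= adj_nb_nt tB mB e ev eqxx.
      by rewrite /blk /= adj_nt_emb eqxx oB tB.
  + by apply: old => //; rewrite mB e ev.
- apply: (hub2 z) => // v vB.
  have nv : isnew v by move: vB; rewrite mB e => /eqP /esym /gl_inr.
  have nz : isnew z by apply: gl_inr e.
  apply: blk_step => //.
  by move: nv nz; rewrite /isnew => /orP[]/eqP -> /orP[]/eqP ->;
    rewrite ?eqxx ?adj_nt_nb ?adj_nb_nt ?orbT.
Qed.

Lemma valid_sig k P : division n.+2 k P -> valid (sm (restr P) ot ob) (sig P).
Proof.
move=> hD; rewrite sm_restr /sig /valid.
case u: (sm P (emb ot) (emb ob));
case J: (sm P nt (emb ot)); case K: (sm P nb (emb ob)); case C: (sm P nt nb) => //=.
- have K' : sm P (emb ob) nb by rewrite sm_sym K.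
  by rewrite -C (sm_trans J (sm_trans u K')).
- have C' : sm P nb nt by rewrite sm_sym C.
  by rewrite -K (sm_trans C' (sm_trans J u)).
- have u' : sm P (emb ob) (emb ot) by rewrite sm_sym u.
  by rewrite -J (sm_trans C (sm_trans K u')).
- have J' : sm P (emb ot) nt by rewrite sm_sym J.
  by rewrite -u (sm_trans J' (sm_trans C K)).
Qed.

Lemma ext_restr k P : division n.+2 k P -> P = ext (restr P) (sig P).
Proof.
move=> hD; have hP := div_part hD.
set Q := restr P.
pose F (z : T') : ({set T} + bool)%type :=
  if [pick x | sm P z (emb x)] is Some x then inl (pblock Q x)
  else inr (~~ sm P z nt).
have sQ x y : (pblock Q x == pblock Q y) = sm P (emb x) (emb y).
  by rewrite -sm_restr.
have eqinl (X Y : {set T}) : (inl X == inl Y :> ({set T} + bool)) = (X == Y) by [].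
have Fsm z w : (F z == F w) = sm P z w.
  rewrite /F; case: pickP => [x1 h1|n1]; case: pickP => [x2 h2|n2] //=.
  - rewrite eqinl sQ; apply/idP/idP => h.
      by apply: sm_trans h1 (sm_trans h _); rewrite sm_sym.
    by apply: sm_trans _ (sm_trans h h2); rewrite sm_sym.
  - by apply/esym/negbTE/negP => h; move: (n2 x1); rewrite (sm_trans _ h1) // sm_sym.
  - by apply/esym/negbTE/negP => h; move: (n1 x2); rewrite (sm_trans h h2).
  - have nz : isnew z.
      have [e|e|[a e]] := squareP z; rewrite e /isnew ?eqxx ?orbT //.
      by have := n1 a; rewrite -e sm_refl.
    have nw : isnew w.
      have [e|e|[a e]] := squareP w; rewrite e /isnew ?eqxx ?orbT //.
      by have := n2 a; rewrite -e sm_refl.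
    move: nz nw; rewrite /isnew => /orP[]/eqP -> /orP[]/eqP ->;
      rewrite ?sm_refl ?eqxx //= ?(sm_sym P nt nb) //.
    all: try by case: (sm P nb nt).
have glF z : gl Q (sig P) z = F z.
  rewrite /F; have [ez|ez|[a ez]] := squareP z; subst z.
  - rewrite gl_nt /sig; case: pickP => [x hx|hn].
      have := L_nt hD hx; case/orP => [J | /andP[C K]].
        rewrite J; congr inl; apply/eqP; rewrite sQ.
        by apply: sm_trans _ hx; rewrite sm_sym.
      case J: (sm P nt (emb ot)).
        congr inl; apply/eqP; rewrite sQ.
        by apply: sm_trans _ hx; rewrite sm_sym.
      have K' : sm P nb (emb ob) by apply: sm_trans _ K; rewrite sm_sym.
      rewrite C K' /=; congr inl; apply/eqP; rewrite sQ.
      by apply: sm_trans _ hx; rewrite sm_sym.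
    have J : sm P nt (emb ot) = false by apply: hn.
    rewrite J sm_refl /=.
    case C: (sm P nt nb); case K: (sm P nb (emb ob)) => //=.
    by have := hn ob; rewrite (sm_trans C K).
  - rewrite gl_nb /sig; case: pickP => [x hx|hn].
      have := L_nb hD hx; case/orP => [K | /andP[C J]].
        rewrite K; congr inl; apply/eqP; rewrite sQ.
        by apply: sm_trans _ hx; rewrite sm_sym.
      case K: (sm P nb (emb ob)).
        congr inl; apply/eqP; rewrite sQ.
        by apply: sm_trans _ hx; rewrite sm_sym.
      have J' : sm P nt (emb ot) by apply: sm_trans _ J; rewrite sm_sym.
      rewrite (sm_sym P nt nb) C J' /=; congr inl; apply/eqP; rewrite sQ.
      by apply: sm_trans _ hx; rewrite sm_sym.
    have K : sm P nb (emb ob) = false by apply: hn.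
    rewrite K (sm_sym P nt nb) /=.
    case C: (sm P nb nt); case J: (sm P nt (emb ot)) => //=.
    by have := hn ot; rewrite (sm_trans C J).
  - rewrite gl_emb; case: pickP => [x hx|hn]; last by have := hn a; rewrite sm_refl.
    by congr inl; apply/eqP; rewrite sQ.
apply: part_eq_sm => //; first exact: ext_part.
by move=> z w; rewrite sm_ext !glF Fsm.
Qed.

End Restr.


Lemma card_fibers (T I : finType) (A : {set T}) (f : T -> I) :
  #|A| = \sum_(i : I) #|[set x in A | f x == i]|.
Proof.
rewrite -sum1_card (partition_big f xpredT) //=; apply: eq_bigr => i _.
by rewrite -sum1_card; apply: eq_bigl => x; rewrite inE.
Qed.

Lemma div_shift m (Q : {set {set square m}}) d k :
  division m #|Q| Q && (#|Q| + d == k) = (d <= k) && division m (k - d) Q.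
Proof.
rewrite /division eqxx /=.
case: (partition _ _); case: [forall A in Q, piece A]; rewrite /= ?andbF //; lia.
Qed.

Definition cnt n k b := #|[set P : {set {set square n.+1}} |
  division n.+1 k P & sm P (ord0, ord_max) (ord_max, ord_max) == b]|.

Lemma step n k b : cnt n.+1 k b = \sum_(sg : sigT) \sum_(u : bool)
  (if valid u sg && (sg.2 == b) && (delta sg <= k) then cnt n (k - delta sg) u else 0).
Proof.
rewrite /cnt (card_fibers _ (@sig n)); apply: eq_bigr => sg _.
set S := [set x in _ | _].
pose R := [set Q : {set {set square n.+1}} | division n.+1 #|Q| Q &&
   [&& valid (sm Q (@ot n) (@ob n)) sg, #|Q| + delta sg == k & sg.2 == b]].
have -> : S = (fun Q => ext Q sg) @: R.
  apply/setP => P; rewrite !inE; apply/idP/imsetP.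
  - case/andP=> /andP[hD hb] /eqP hs.
    exists (restr P); last by rewrite -hs; apply: ext_restr hD.
    rewrite inE (restr_div hD) /=; apply/and3P; split.
    + by rewrite -hs (valid_sig hD).
    + by rewrite -(@card_ext n (restr P) sg (restr_part P)) -hs -(ext_restr hD) (div_card hD).
    + by rewrite -hs.
  - case=> Q; rewrite inE => /andP[hD /and3P[hv hk hb]] ->.
    have hQ := div_part hD.
    rewrite (sig_ext hv) eqxx andbT.
    have -> : k = #|ext Q sg| by rewrite card_ext //; apply/esym/eqP.
    rewrite (ext_div sg hD) /=.
    by move: hb; rewrite -(congr1 snd (sig_ext hv)).
rewrite card_in_imset; last first.
  move=> Q1 Q2; rewrite !inE => /andP[h1 _] /andP[h2 _] e.
  by rewrite -(restr_ext sg (div_part h1)) -(restr_ext sg (div_part h2)) e.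
rewrite (card_fibers _ (fun Q => sm Q (@ot n) (@ob n))); apply: eq_bigr => u _.
case: ifP => hc.
  apply: eq_card => Q; rewrite !inE /ot /ob.
  case: (boolP (sm Q (ord0, ord_max) (ord_max, ord_max) == u)) => hu;
    rewrite ?andbF ?andbT //.
  move/eqP: hu => ->; move: hc => /andP[/andP[hv hb] hd].
  by rewrite hv hb /= andbT div_shift hd.
apply/eqP; rewrite cards_eq0; apply/eqP/setP => Q; rewrite !inE.
apply/negbTE/negP => /andP[/andP[_ /and3P[hv /eqP hk hb]] /eqP hu].
by move: hc; rewrite -hu hv hb -hk leq_addl.
Qed.


Definition c1t : square 1 := (ord0, ord_max).
Definition c1b : square 1 := (ord_max, ord_max).

Lemma sq1 (x : square 1) : x = c1t \/ x = c1b.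
Proof.
case: x => r c; have -> : c = ord_max by apply: val_inj; case: c => [[|]].
by case: (rows r) => ->; [left|right].
Qed.

Lemma c1tb : c1t != c1b. Proof. by []. Qed.
Lemma adj1 : adjacent c1t c1b. Proof. by []. Qed.
Lemma adj1' : adjacent c1b c1t. Proof. by []. Qed.

Definition Psame := preim_partition (fun _ : square 1 => tt) [set: square 1].
Definition Psplit := preim_partition (fun x : square 1 => x) [set: square 1].

Lemma div1 (P : {set {set square 1}}) : partition P [set: square 1] ->
  division 1 #|P| P.
Proof.
move=> hP; apply: div_intro => // x y sxy.
have xB : x \in pblock P x by rewrite partT_pblock // sm_refl.
have yB : y \in pblock P x by rewrite partT_pblock.
apply: blk_step => //.
by case: (sq1 x) => ->; case: (sq1 y) => ->; rewrite ?eqxx ?adj1 ?adj1' ?orbT.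
Qed.

Lemma card_same : #|Psame| = 1.
Proof.
rewrite (card_part_kernel (g := fun _ : square 1 => tt) c1t (preim_partitionP _ _));
  last by move=> x y; rewrite sm_preim.
have -> : (fun _ : square 1 => tt) @: [set: square 1] = [set tt].
  apply/setP => -[]; rewrite in_set1 eqxx; apply/imsetP; by exists c1t.
by rewrite cards1.
Qed.

Lemma card_split : #|Psplit| = 2.
Proof.
rewrite (card_part_kernel (g := fun x : square 1 => x) c1t (preim_partitionP _ _));
  last by move=> x y; rewrite sm_preim.
by rewrite imset_id cardsT card_prod !card_ord.
Qed.

Lemma uniq1 (P : {set {set square 1}}) : partition P [set: square 1] ->
  P = if sm P c1t c1b then Psame else Psplit.
Proof.
move=> hP; case: ifP => h; apply: part_eq_sm => //; try exact: preim_partitionP.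
all: move=> x y; rewrite sm_preim.
all: by case: (sq1 x) => ->; case: (sq1 y) => ->; rewrite ?sm_refl ?eqxx // sm_sym h.
Qed.

Lemma base k b : cnt 0 k b = (k == (if b then 1 else 2)).
Proof.
have [P0 [hP0 sP0 cP0 eP0]] : exists P0, [/\ partition P0 [set: square 1], sm P0 c1t c1b = b,
   #|P0| = (if b then 1 else 2) & P0 = if b then Psame else Psplit].
  exists (if b then Psame else Psplit); case: b; split; rewrite ?sm_preim ?card_same ?card_split //;
    exact: preim_partitionP.
rewrite /cnt; have -> : [set P : {set {set square 1}} | division 1 k P & sm P (ord0, ord_max) (ord_max, ord_max) == b]
   = [set P | (P == P0) && (k == (if b then 1 else 2))].
  apply/setP => P; rewrite !inE; apply/idP/idP.
    case/andP=> hD /eqP hs; have hP := div_part hD.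
    have e : P = P0 by rewrite (uniq1 hP) eP0; move: hs; rewrite /c1t /c1b => ->.
    by rewrite e eqxx -cP0 -e (div_card hD) eqxx.
  case/andP=> /eqP -> /eqP ->; rewrite -cP0 div1 //=.
  by move: sP0; rewrite /c1t /c1b => ->.
case: eqP => _; last by rewrite (_ : [set _ | _] = set0) ?cards0 //; apply/setP => P; rewrite !inE andbF.
by rewrite (_ : [set _ | _] = [set P0]) ?cards1 //; apply/setP => P; rewrite !inE andbT.
Qed.


Definition sh (j : nat) (f : nat -> nat) k := if j <= k then f (k - j) else 0.

Lemma stepT n k : cnt n.+1 k true = cnt n k true + sh 1 (cnt n ^~ true) k
  + 2 * cnt n k false + sh 1 (cnt n ^~ false) k.
Proof.
rewrite step /index_enum !unlock /= /prod_enum /=. rewrite !enumT !unlock /= /prod_enum /= !enumT !unlock /= /sh !addn0 !add0n !subn0.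
by case: (1 <= k); lia.
Qed.

Lemma stepF n k : cnt n.+1 k false = 2 * sh 1 (cnt n ^~ true) k + sh 2 (cnt n ^~ true) k
  + cnt n k false + 2 * sh 1 (cnt n ^~ false) k + sh 2 (cnt n ^~ false) k.
Proof.
rewrite step /index_enum !unlock /= /prod_enum /= !enumT !unlock /= /prod_enum /= !enumT !unlock /= /sh !addn0 !add0n !subn0.
rewrite -[1 + 1]/2; by case: (0 < k); case: (1 < k); lia.
Qed.


Definition bexact e (f : nat -> nat) := exists c : nat -> nat,
  0 < c e /\ forall m, f m = \sum_(j < e.+1) c j * 'C(m, j).
Definition ble e (f : nat -> nat) := exists c : nat -> nat,
  forall m, f m = \sum_(j < e.+1) c j * 'C(m, j).

Lemma ble0 e : ble e (fun _ => 0).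
Proof. by exists (fun _ => 0) => m; rewrite big1. Qed.

Lemma bexact_ble e f : bexact e f -> ble e f.
Proof. by case=> c [_ h]; exists c. Qed.

Lemma ble_ext e f g : (forall m, f m = g m) -> ble e f -> ble e g.
Proof. by move=> h [c hc]; exists c => m; rewrite -h. Qed.

Lemma bexact_ext e f g : (forall m, f m = g m) -> bexact e f -> bexact e g.
Proof. by move=> h [c [hc0 hc]]; exists c; split=> // m; rewrite -h. Qed.

Lemma ble_mono e e' f : e <= e' -> ble e f -> ble e' f.
Proof.
move=> le [c hc]; exists (fun j => if j <= e then c j else 0) => m.
rewrite hc (big_ord_widen e'.+1 (fun j => c j * 'C(m, j))) // big_mkcond.
by apply: eq_bigr => i _; rewrite ltnS; case: ifP.
Qed.

Lemma bexact_add e f g : bexact e f -> ble e g -> bexact e (fun m => f m + g m).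
Proof.
case=> c [hc0 hc] [c' hc']; exists (fun j => c j + c' j); split.
  by rewrite ltn_addr.
by move=> m; rewrite hc hc' -big_split; apply: eq_bigr => i _; rewrite mulnDl.
Qed.

Lemma ble_add e f g : ble e f -> ble e g -> ble e (fun m => f m + g m).
Proof.
case=> c hc [c' hc']; exists (fun j => c j + c' j).
by move=> m; rewrite hc hc' -big_split; apply: eq_bigr => i _; rewrite mulnDl.
Qed.

Lemma ble_double e f : ble e f -> ble e (fun m => 2 * f m).
Proof.
case=> c hc; exists (fun j => 2 * c j) => m.
by rewrite hc big_distrr; apply: eq_bigr => i _ /=; rewrite mulnA.
Qed.

Lemma bexact_double e f : bexact e f -> bexact e (fun m => 2 * f m).
Proof.
case=> c [hc0 hc]; exists (fun j => 2 * c j); split; first by rewrite muln_gt0.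
by move=> m; rewrite hc big_distrr; apply: eq_bigr => i _; rewrite /= mulnA.
Qed.

Lemma anti_sum e (c : nat -> nat) f :
  (forall m, f m.+1 = f m + \sum_(j < e.+1) c j * 'C(m, j)) ->
  forall m, f m = \sum_(j < e.+2) (if (j : nat) is j'.+1 then c j' else f 0) * 'C(m, j).
Proof.
move=> h; elim=> [|m IH].
  by rewrite big_ord_recl /= bin0 muln1 big1 ?addn0 // => i _; rewrite bin0n muln0.
rewrite h IH !(big_ord_recl e.+1) /= !bin0 -addnA; congr addn.
rewrite -big_split; apply: eq_bigr => i _ /=.
by rewrite /bump /= add1n binS mulnDr addnC.
Qed.

Lemma bexact_anti e f g : bexact e g -> (forall m, f m.+1 = f m + g m) ->
  bexact e.+1 f.
Proof.
case=> c [hc0 hc] h; exists (fun j => if j is j'.+1 then c j' else f 0); split=> //.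
by apply: anti_sum => m; rewrite h hc.
Qed.


Definition sa k m := cnt m k true.
Definition sb k m := cnt m k false.

Lemma sa_S k m : sa k m.+1 = sa k m + sh 1 (sa^~ m) k + 2 * sb k m + sh 1 (sb^~ m) k.
Proof. exact: stepT. Qed.
Lemma sb_S k m : sb k m.+1 = 2 * sh 1 (sa^~ m) k + sh 2 (sa^~ m) k
  + sb k m + 2 * sh 1 (sb^~ m) k + sh 2 (sb^~ m) k.
Proof. exact: stepF. Qed.
Lemma sa_0 k : sa k 0 = (k == 1).
Proof. exact: base. Qed.
Lemma sb_0 k : sb k 0 = (k == 2).
Proof. exact: base. Qed.

Lemma zero0 m : sa 0 m = 0 /\ sb 0 m = 0.
Proof.
elim: m => [|m [IHa IHb]]; first by rewrite sa_0 sb_0.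
by rewrite sa_S sb_S IHa IHb /sh.
Qed.

Lemma sb1 m : sb 1 m = 0.
Proof.
elim: m => [|m IH]; first by rewrite sb_0.
by rewrite sb_S IH /sh /= ?subn0 !(proj1 (zero0 m)) !(proj2 (zero0 m)).
Qed.

Lemma sa1 m : sa 1 m = 1.
Proof.
elim: m => [|m IH]; first by rewrite sa_0.
by rewrite sa_S IH /sh /= ?subn0 sb1 !(proj1 (zero0 m)) !(proj2 (zero0 m)).
Qed.

Lemma sb_SS j m : sb j.+2 m.+1 = sb j.+2 m +
  (2 * sa j.+1 m + sa j m + 2 * sb j.+1 m + sb j m).
Proof. rewrite sb_S /sh /= ?subSS ?subn0; lia. Qed.

Lemma sa_SS j m : sa j.+2 m.+1 = sa j.+2 m + (sa j.+1 m + 2 * sb j.+2 m + sb j.+1 m).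
Proof. rewrite sa_S /sh /= ?subSS ?subn0; lia. Qed.

Lemma main_inv j : [/\ bexact (2 * j) (sa j.+1), ble (2 * j) (sb j.+1),
  ble (2 * j) (sa j) & ble (2 * j) (sb j)] /\ bexact (2 * j).+1 (sb j.+2).
Proof.
have nxt j' : bexact (2 * j') (sa j'.+1) -> ble (2 * j') (sb j'.+1) ->
  ble (2 * j') (sa j') -> ble (2 * j') (sb j') ->
  bexact (2 * j').+1 (sb j'.+2) /\ bexact (2 * j').+2 (sa j'.+2).
  move=> ha hb ha' hb'.
  have eb : bexact (2 * j').+1 (sb j'.+2).
    apply: bexact_anti (fun m => sb_SS j' m).
    apply: bexact_add; last exact: hb'.
    apply: bexact_add; last exact: ble_double.
    by apply: bexact_add; [exact: bexact_double | exact: ha'].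
  split=> //; apply: bexact_anti (fun m => sa_SS j' m).
  apply: bexact_add; last exact: ble_mono (leqnSn _) hb.
  apply: (bexact_ext (f := fun m => 2 * sb j'.+2 m + sa j'.+1 m)).
    by move=> m; rewrite addnC.
  apply: bexact_add; first exact: bexact_double.
  exact: ble_mono (leqnSn _) (bexact_ble ha).
elim: j => [|j [[ha hb ha' hb'] _]].
  have ha : bexact 0 (sa 1).
    by exists (fun _ => 1); split=> // m; rewrite big_ord1 bin0 sa1.
  have hb : ble 0 (sb 1) by apply: ble_ext (ble0 0) => m; rewrite sb1.
  have ha' : ble 0 (sa 0) by apply: ble_ext (ble0 0) => m; rewrite (proj1 (zero0 m)).
  have hb' : ble 0 (sb 0) by apply: ble_ext (ble0 0) => m; rewrite (proj2 (zero0 m)).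
  by split=> //; case: (nxt 0 ha hb ha' hb').
have [eb ea] := nxt j ha hb ha' hb'.
have le2 : 2 * j <= 2 * j.+1 by rewrite leq_mul2l leqnSn orbT.
have ha2 : bexact (2 * j.+1) (sa j.+2) by rewrite mulnS.
have hb2 : ble (2 * j.+1) (sb j.+2).
  by apply: ble_mono (bexact_ble eb); rewrite mulnS.
have [eb2 _] := nxt j.+1 ha2 hb2 (ble_mono le2 (bexact_ble ha)) (ble_mono le2 hb).
split=> //; split=> //; [exact: ble_mono le2 (bexact_ble ha) | exact: ble_mono le2 hb].
Qed.


Lemma d_cnt k n : d k n.+1 = (cnt n k true + cnt n k false)%N.
Proof.
rewrite /d (card_fibers _ (fun P => sm P (ord0, ord_max) (ord_max, ord_max))) big_bool.
by congr addn; apply: eq_card => P; rewrite !inE.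
Qed.

Lemma s_cnt k n : s k n.+1 = cnt n k false.
Proof.
by rewrite /s /cnt; apply: eq_card => P; rewrite !inE split_sm; case: sm.
Qed.

Section PolyPart.
Import GRing.Theory Num.Theory.
Local Open Scope ring_scope.

Definition Bp (j : nat) : {poly rat} :=
  (j`!%:R)^-1 *: \prod_(0 <= i < j) ('X - (i.+1)%:R%:P).

Lemma ffact_rat (n j : nat) : \prod_(0 <= i < j) (n%:R - i%:R) = (n ^_ j)%:R :> rat.
Proof.
elim: j => [|j IH]; first by rewrite big_geq // ffact0.
rewrite big_nat_recr //= IH ffactnSr natrM.
case: (leqP j n) => h; first by rewrite natrB.
by rewrite ffact_small // !mul0r.
Qed.

Lemma fact_neq0 j : (j`!%:R : rat) != 0.
Proof. by rewrite pnatr_eq0 -lt0n fact_gt0. Qed.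

Lemma Bp_eval j n : (Bp j).[n.+1%:R] = ('C(n, j))%:R.
Proof.
rewrite /Bp hornerZ horner_prod.
under eq_bigr => i _ do rewrite hornerXsubC.
have -> : \prod_(0 <= i < j) ((n.+1)%:R - (i.+1)%:R) = \prod_(0 <= i < j) (n%:R - i%:R) :> rat.
  by apply: eq_bigr => i _; rewrite -[n.+1]addn1 -[i.+1]addn1 !natrD; ring.
rewrite ffact_rat -bin_ffact natrM mulrC mulfK //; exact: fact_neq0.
Qed.

Lemma Bp_size j : size (Bp j) = j.+1.
Proof.
by rewrite /Bp size_scale ?invr_eq0 ?fact_neq0 // size_prod_XsubC size_iota subn0.
Qed.

Lemma size_psum (c : nat -> nat) i : (size (\sum_(j < i) (c j)%:R *: Bp j)%R <= i)%N.
Proof.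
elim: i => [|i IH]; first by rewrite big_ord0 size_poly0.
rewrite big_ord_recr /=; apply: leq_trans (size_polyD _ _) _.
rewrite geq_max (leq_trans IH) // (leq_trans (size_scale_leq _ _)) //.
by rewrite Bp_size.
Qed.

Lemma bexact_poly e f : bexact e f -> exists D : {poly rat}, size D = e.+1 /\
  forall n : nat, (1 <= n)%N -> D.[n%:R] = (f n.-1)%:R.
Proof.
case=> c [hc0 hc]; exists (\sum_(j < e.+1) (c j)%:R *: Bp j); split.
  have ce : (c e)%:R != 0 :> rat by rewrite pnatr_eq0 -lt0n.
  by rewrite big_ord_recr /= addrC size_polyDl size_scale ?Bp_size // ltnS size_psum.
case=> // n _; rewrite /= hc horner_sum natr_sum; apply: eq_bigr => j _.
by rewrite hornerZ Bp_eval natrM.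
Qed.

End PolyPart.
Import GRing.Theory.
Local Open Scope ring_scope.

Theorem theorem3 :
  (forall k : nat, (1 <= k)%N ->
     exists D : {poly rat}, size D = (2 * k - 1)%N /\
       forall n : nat, (1 <= n)%N -> D.[n%:R] = (d k n)%:R) /\
  (forall k : nat, (2 <= k)%N ->
     exists S : {poly rat}, size S = (2 * k - 2)%N /\
       forall n : nat, (1 <= n)%N -> S.[n%:R] = (s k n)%:R).
Proof.
split.
  case=> // j _; have [[ha hb _ _] _] := main_inv j.
  have := bexact_poly (bexact_add ha hb) => -[D [hs hD]].
  exists D; split; first by rewrite hs; lia.
  by case=> // n _; rewrite hD // d_cnt.
case=> // [[]] // j _; have [_ hb] := main_inv j.
have [S [hs hS]] := bexact_poly hb.
exists S; split; first by rewrite hs; lia.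
by case=> // n _; rewrite hS // s_cnt.
Qed.
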